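(* For $n=0,1,2,\ldots$ let $R_n=\sum_{k=0}^n\binom{n}{k}\binom{n+k}{k}\frac{1}{2k-1}$. Then the sequence $\{\sqrt[n]{R_n}\}_{n=1}^\infty$ is strictly increasing, and $\lim_{n\to\infty}\sqrt[n]{R_n}=3+2\sqrt{2}$. *)

(* Defs.v *)
From Stdlib Require Import Reals.
From Coquelicot Require Import Coquelicot.
Open Scope R_scope.

(* R_n = sum_{k=0}^n C(n,k) C(n+k,k) / (2k-1).  Note sum_f_R0 f n sums k = 0..n. *)
Definition Rseq (n : nat) : R :=
  sum_f_R0 (fun k => Binomial.C n k * Binomial.C (n + k) k / (2 * INR k - 1)) n.

(* n-th root of R_n, as R_n^(1/n) (R_n > 0 for n >= 1). *)
Definition rootRseq (n : nat) : R := Rpower (Rseq n) (/ INR n).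

(* Main.v *)
Require Import Defs.
From Stdlib Require Import Reals Lra Lia.
From Coquelicot Require Import Coquelicot.
Open Scope R_scope.


Definition aa (n k : nat) : R := Binomial.C n k * Binomial.C (n + k) k.
Definition Dseq (n : nat) : R := sum_f_R0 (fun k => aa n k) n.

Lemma aE n k : (k <= n)%nat ->
  aa n k = INR (Factorial.fact (n + k)) / (INR (Factorial.fact k) ^ 2 * INR (Factorial.fact (n - k))).
Proof.
  intros H. unfold aa, Binomial.C.
  replace (n + k - k)%nat with n by lia.
  pose proof (INR_fact_neq_0 n). pose proof (INR_fact_neq_0 k).
  pose proof (INR_fact_neq_0 (n - k)). field. auto.
Qed.

Lemma L1 n k : (k <= n)%nat ->
  (INR n + 1 - INR k) * aa (S n) k = (INR n + 1 + INR k) * aa n k.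
Proof.
  intros H. rewrite !aE by lia.
  replace (S n - k)%nat with (S (n - k)) by lia.
  replace (S n + k)%nat with (S (n + k)) by lia.
  rewrite !fact_simpl, !mult_INR, !S_INR, minus_INR by lia.
  rewrite plus_INR.
  pose proof (INR_fact_neq_0 (n+k)). pose proof (INR_fact_neq_0 k).
  pose proof (INR_fact_neq_0 (n - k)).
  assert (INR n - INR k + 1 <> 0). { apply le_INR in H. lra. }
  field. auto.
Qed.

Lemma L2 n k : (S k <= n)%nat ->
  (INR k + 1) ^ 2 * aa n (S k) = (INR n - INR k) * (INR n + INR k + 1) * aa n k.
Proof.
  intros H. rewrite !aE by lia.
  replace (n - k)%nat with (S (n - S k)) by lia.
  replace (n + S k)%nat with (S (n + k)) by lia.
  rewrite !fact_simpl, !mult_INR, !S_INR, minus_INR by lia.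
  rewrite plus_INR, S_INR.
  pose proof (INR_fact_neq_0 (n+k)). pose proof (INR_fact_neq_0 k).
  pose proof (INR_fact_neq_0 (n - S k)).
  assert (INR k + 1 <> 0). { pose proof (pos_INR k). lra. }
  assert (INR n - (INR k + 1) + 1 <> 0). { apply le_INR in H. rewrite S_INR in H. lra. }
  field. auto.

Qed.

Lemma solve_lin p q x y : p <> 0 -> p * x = q * y -> x = q / p * y.
Proof. intros Hp H. apply (Rmult_eq_reg_l p); auto. rewrite H. field. auto. Qed.

Lemma sum_lin3 (f g h : nat -> R) (al be ga : R) N :
  sum_f_R0 (fun k => al * f k - be * g k + ga * h k) N
  = al * sum_f_R0 f N - be * sum_f_R0 g N + ga * sum_f_R0 h N.
Proof. induction N; simpl; [ring|rewrite IHN; ring]. Qed.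

Lemma Dint n j : (S j <= n)%nat ->
  let k := S j in
  (INR n + 2) * aa (S (S n)) k - 3 * (2 * INR n + 3) * aa (S n) k + (INR n + 1) * aa n k
  = - (4 * INR n + 6) * (aa (S n) k - aa (S n) j).
Proof.
  intros H k. unfold k.
  pose proof (L1 n (S j) H) as e1.
  pose proof (L1 (S n) (S j) ltac:(lia)) as e2.
  pose proof (L2 (S n) j ltac:(lia)) as e3.
  apply le_INR in H. rewrite !S_INR in *.
  assert (Hp1 : INR n + 1 - (INR j + 1) <> 0) by lra.
  assert (Hp2 : INR n + 1 + 1 - (INR j + 1) <> 0) by lra.
  apply solve_lin in e1; auto. apply solve_lin in e2; auto.
  assert (Hp3 : (INR n + 1 - INR j) * (INR n + 1 + INR j + 1) <> 0).
  { pose proof (pos_INR j). apply Rmult_integral_contrapositive; split; lra. }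
  symmetry in e3. apply solve_lin in e3; auto.
  rewrite e3, e2, e1. field. pose proof (pos_INR j). repeat split; lra.
Qed.

Lemma Dtel n m : (m <= n)%nat ->
  sum_f_R0 (fun k => (INR n + 2) * aa (S (S n)) k - 3 * (2 * INR n + 3) * aa (S n) k + (INR n + 1) * aa n k) m
  = - (4 * INR n + 6) * aa (S n) m.
Proof.
  induction m as [|m IH]; intros H.
  - simpl. unfold aa, Binomial.C. rewrite !Nat.sub_0_r, !Nat.add_0_r. simpl.
    pose proof (INR_fact_neq_0 n). pose proof (INR_fact_neq_0 (S n)).
    pose proof (INR_fact_neq_0 (S (S n))). field. auto.
  - simpl. rewrite IH by lia. rewrite (Dint n m) by lia. ring.
Qed.

Lemma Drec n : (INR n + 2) * Dseq (S (S n)) - 3 * (2 * INR n + 3) * Dseq (S n) + (INR n + 1) * Dseq n = 0.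
Proof.
  unfold Dseq. rewrite !tech5.
  replace ((INR n + 2) * (sum_f_R0 (fun k : nat => aa (S (S n)) k) n + aa (S (S n)) (S n) + aa (S (S n)) (S (S n))) -
   3 * (2 * INR n + 3) * (sum_f_R0 (fun k : nat => aa (S n) k) n + aa (S n) (S n)) +
   (INR n + 1) * sum_f_R0 (fun k : nat => aa n k) n)
  with (sum_f_R0 (fun k => (INR n + 2) * aa (S (S n)) k - 3 * (2 * INR n + 3) * aa (S n) k + (INR n + 1) * aa n k) n
        + ((INR n + 2) * (aa (S (S n)) (S n) + aa (S (S n)) (S (S n))) - 3 * (2 * INR n + 3) * aa (S n) (S n))).
  2:{ rewrite sum_lin3. change (fun k : nat => aa (S (S n)) k) with (aa (S (S n))). change (fun k : nat => aa (S n) k) with (aa (S n)). change (fun k : nat => aa n k) with (aa n). ring. }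
  rewrite Dtel by lia.
  pose proof (L2 (S n) n ltac:(lia)) as e1.
  pose proof (L1 (S n) (S n) ltac:(lia)) as e2.
  pose proof (L2 (S (S n)) (S n) ltac:(lia)) as e3.
  rewrite !S_INR in *.
  assert (INR n + 1 <> 0) by (pose proof (pos_INR n); lra).
  assert (INR n + 1 + 1 <> 0) by (pose proof (pos_INR n); lra).
  apply solve_lin in e1; [|apply pow_nonzero; auto].
  replace (INR n + 1 + 1 - (INR n + 1)) with 1 in e2 by ring. rewrite Rmult_1_l in e2.
  apply solve_lin in e3; [|apply pow_nonzero; auto].
  rewrite e3, e2, e1. field. auto.
Qed.

Lemma two_k_m1 k : 2 * INR k - 1 <> 0.
Proof.
  intro H. destruct k. simpl in H. lra.
  rewrite S_INR in H. pose proof (pos_INR k). lra.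
Qed.

Lemma Rrel n : (2 * INR n + 1) * Rseq (S n) = (2 * INR n + 3) * Rseq n + Dseq n + Dseq (S n).
Proof.
  unfold Rseq, Dseq. rewrite !tech5.
  change (fun k : nat => Binomial.C (S n) k * Binomial.C (S n + k) k / (2 * INR k - 1))
    with (fun k => aa (S n) k / (2 * INR k - 1)).
  change (fun k : nat => Binomial.C n k * Binomial.C (n + k) k / (2 * INR k - 1))
    with (fun k => aa n k / (2 * INR k - 1)).
  assert (E : forall m, (m <= n)%nat ->
     (2 * INR n + 1) * sum_f_R0 (fun k => aa (S n) k / (2 * INR k - 1)) m
     = (2 * INR n + 3) * sum_f_R0 (fun k => aa n k / (2 * INR k - 1)) m
       + sum_f_R0 (fun k => aa n k) m + sum_f_R0 (fun k => aa (S n) k) m).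
  { induction m as [|m IH]; intros Hm.
    - simpl. pose proof (L1 n 0 ltac:(lia)) as e. simpl in e.
      pose proof (two_k_m1 0).
      assert (INR n + 1 - 0 <> 0) by (pose proof (pos_INR n); lra).
      apply solve_lin in e; auto. rewrite e. field. pose proof (pos_INR n). repeat split; try lra; auto.
    - rewrite !tech5, Rmult_plus_distr_l, IH by lia.
      pose proof (L1 n (S m) Hm) as e.
      pose proof (two_k_m1 (S m)).
      assert (INR n + 1 - INR (S m) <> 0).
      { apply le_INR in Hm. rewrite S_INR in *. lra. }
      apply solve_lin in e; auto. rewrite e. field. auto. }
  rewrite Rmult_plus_distr_l, E by lia.
  pose proof (two_k_m1 (S n)). rewrite S_INR in *. change (Binomial.C (S n) (S n) * Binomial.C (S n + S n) (S n)) with (aa (S n) (S n)). field. replace (2 * (INR n + 1) - 1) with (2 * INR n + 1) in * by ring. auto.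
Qed.

Lemma R3rec n : (INR n + 3) * Rseq (S (S (S n))) =
  (7 * INR n + 13) * Rseq (S (S n)) - (7 * INR n + 15) * Rseq (S n) + (INR n + 1) * Rseq n.
Proof.
  pose proof (Rrel n) as h0. pose proof (Rrel (S n)) as h1. pose proof (Rrel (S (S n))) as h2.
  pose proof (Drec n) as d0. pose proof (Drec (S n)) as d1.
  rewrite !S_INR in *. pose proof (pos_INR n).
  set (x := INR n) in *.
  set (R0 := Rseq n) in *. set (R1 := Rseq (S n)) in *. set (R2 := Rseq (S (S n))) in *.
  set (R3 := Rseq (S (S (S n)))) in *.
  set (D0 := Dseq n) in *. set (D1 := Dseq (S n)) in *. set (D2 := Dseq (S (S n))) in *.
  set (D3 := Dseq (S (S (S n)))) in *.
  assert (eD2 : D2 = (3 * (2 * x + 3) * D1 - (x + 1) * D0) / (x + 2)).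
  { apply (Rmult_eq_reg_l (x + 2)); [|lra]. field_simplify; [lra|lra]. }
  assert (eD3 : D3 = (3 * (2 * x + 5) * D2 - (x + 2) * D1) / (x + 3)).
  { apply (Rmult_eq_reg_l (x + 3)); [|lra]. field_simplify; [lra|lra]. }
  assert (eR1 : R1 = ((2 * x + 3) * R0 + D0 + D1) / (2 * x + 1)).
  { apply (Rmult_eq_reg_l (2 * x + 1)); [|lra]. field_simplify; [lra|lra]. }
  assert (eR2 : R2 = ((2 * x + 5) * R1 + D1 + D2) / (2 * x + 3)).
  { apply (Rmult_eq_reg_l (2 * x + 3)); [|lra]. field_simplify; [lra|lra]. }
  assert (eR3 : R3 = ((2 * x + 7) * R2 + D2 + D3) / (2 * x + 5)).
  { apply (Rmult_eq_reg_l (2 * x + 5)); [|lra]. field_simplify; [lra|lra]. }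
  rewrite eR3, eR2, eR1, eD3, eD2. field. repeat split; lra.
Qed.

Definition Phi (x a b : R) : R := ((7 * x + 13) - (7 * x + 15) / a + (x + 1) / (a * b)) / (x + 3).

Lemma frac_le (p q r s : R) : 0 < q -> 0 < s -> p * s <= r * q -> p / q <= r / s.
Proof.
  intros Hq Hs H. unfold Rdiv.
  apply (Rmult_le_reg_r (q * s)). nra.
  replace (p * / q * (q * s)) with (p * s) by (field; lra).
  replace (r * / s * (q * s)) with (r * q) by (field; lra). exact H.
Qed.

Lemma step (x a b c : R) : 4 <= x -> 17/5 <= c ->
  0 < b - c -> b - c <= 100 / (x * (x + 1)) ->
  0 < a - b -> a - b <= 100 / ((x + 1) * (x + 2)) ->
  a = Phi (x - 1) b c ->
  0 < Phi x a b - a /\ Phi x a b - a <= 100 / ((x + 2) * (x + 3)).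
Proof.
  intros Hx Hc Hbc1 Hbc2 Hab1 Hab2 Ha.
  assert (Hb : 17/5 < b) by lra. assert (Ha' : 17/5 < a) by lra.
  set (T1 := (a - b) * / a * / b * ((7 * x + 15 - (x + 1) * / b) / (x + 3))).
  set (T2 := - ((x + 1) / (x + 3)) * ((b - c) * / b * / b * / c)).
  set (T3 := (8 - 6 * / b + 2 * / b * / c) / ((x + 2) * (x + 3))).
  assert (Hid : Phi x a b - a = T1 + T2 + T3).
  { rewrite Ha at 2. unfold Phi, T1, T2, T3.
    replace (x - 1 + 13) with (x + 12) by ring. field. repeat split; lra. }
  assert (ia : 0 < / a < 5/17).
  { split. apply Rinv_0_lt_compat; lra. rewrite <- (Rinv_inv (5/17)). apply Rinv_lt_contravar; [nra|lra]. }
  assert (ib : 0 < / b < 5/17).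
  { split. apply Rinv_0_lt_compat; lra. rewrite <- (Rinv_inv (5/17)). apply Rinv_lt_contravar; [nra|lra]. }
  assert (ic : 0 < / c <= 5/17).
  { split. apply Rinv_0_lt_compat; lra. rewrite <- (Rinv_inv (5/17)). apply Rinv_le_contravar; [nra|lra]. }
  assert (P : 0 < (7 * x + 15 - (x + 1) * / b) / (x + 3) <= 7).
  { split. apply Rdiv_lt_0_compat; nra.
    unfold Rdiv. apply (Rmult_le_reg_r (x + 3)); [lra|]. rewrite Rmult_assoc, Rinv_l by lra. nra. }
  assert (T1p : 0 < T1).
  { unfold T1. apply Rmult_lt_0_compat; [|lra].
    apply Rmult_lt_0_compat; [|lra]. apply Rmult_lt_0_compat; lra. }
  assert (T1u : T1 <= (a - b) * (7 * (25/289))).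
  { unfold T1. assert (0 < /a * /b < 25/289) by nra.
    destruct P as [P1 P2].
    set (q := (7 * x + 15 - (x + 1) * / b) / (x + 3)) in *.
    replace ((a - b) * / a * / b * q) with ((a - b) * ((/ a * / b) * q)) by ring.
    apply Rmult_le_compat_l; [lra|].
    replace (7 * (25/289)) with ((25/289) * 7) by ring.
    apply Rmult_le_compat; lra. }
  assert (T2l : - (100 * (125/4913)) / (x * (x + 3)) <= T2).
  { unfold T2. 
    assert (0 < / b * / b * / c <= 125/4913).
    { split. apply Rmult_lt_0_compat; [nra|lra].
      assert (/ b * / b <= 25/289) by nra. nra. }
    assert (E : (x + 1) / (x + 3) * ((b - c) * / b * / b * / c) <= (x + 1) / (x + 3) * (100 / (x * (x + 1)) * (125/4913))).
    { apply Rmult_le_compat_l. apply Rlt_le, Rdiv_lt_0_compat; lra.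
      replace ((b - c) * / b * / b * / c) with ((b - c) * (/ b * / b * / c)) by ring.
      apply Rmult_le_compat; nra. }
    replace ((x + 1) / (x + 3) * (100 / (x * (x + 1)) * (125 / 4913))) with ((100 * (125/4913)) / (x * (x + 3))) in E by (field; lra).
    unfold Rdiv in *. lra. }
  assert (T2u : T2 <= 0).
  { unfold T2. assert (0 < (x + 1) / (x + 3)) by (apply Rdiv_lt_0_compat; lra).
    assert (0 < (b - c) * / b * / b * / c).
    { repeat apply Rmult_lt_0_compat; lra. }
    nra. }
  assert (T3l : (8 - 6 * (5/17)) / ((x + 2) * (x + 3)) <= T3).
  { unfold T3. apply frac_le; try nra. assert (0 < / b * / c) by nra. nra. }
  assert (T3u : T3 <= (8 + 2 * (25/289)) / ((x + 2) * (x + 3))).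
  { unfold T3. apply frac_le; try nra. assert (/ b * / c <= 25/289) by nra. nra. }
  rewrite Hid. split.
  - assert (- (100 * (125/4913)) / (x * (x + 3)) + (8 - 6 * (5/17)) / ((x + 2) * (x + 3)) > 0).
    { assert (K : (100 * (125/4913)) / (x * (x + 3)) < (8 - 6 * (5/17)) / ((x + 2) * (x + 3))).
      { apply Rmult_lt_reg_r with (x * (x + 2) * (x + 3)). nra.
        unfold Rdiv. field_simplify; nra. }
      unfold Rdiv in *. lra. }
    lra.
  - assert (K : (a - b) * (7 * (25/289)) + (8 + 2 * (25/289)) / ((x + 2) * (x + 3)) <= 100 / ((x + 2) * (x + 3))).
    { assert (K2 : (a - b) * (7 * (25/289)) <= 100 / ((x + 1) * (x + 2)) * (7 * (25/289))) by nra.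
      assert (K3 : 100 / ((x + 1) * (x + 2)) * (7 * (25/289)) + (8 + 2 * (25/289)) / ((x + 2) * (x + 3)) <= 100 / ((x + 2) * (x + 3))).
      { apply Rmult_le_reg_r with ((x + 1) * (x + 2) * (x + 3)). nra.
        unfold Rdiv. field_simplify; nra. }
      lra. }
    lra.
Qed.

Lemma R0v : Rseq 0 = -1.
Proof. unfold Rseq, Binomial.C. simpl. field. Qed.
Lemma D0v : Dseq 0 = 1.
Proof. unfold Dseq, aa, Binomial.C. simpl. field. Qed.
Lemma D1v : Dseq 1 = 3.
Proof. unfold Dseq, aa, Binomial.C. simpl. field. Qed.

Lemma Dnext n d0 d1 : Dseq n = d0 -> Dseq (S n) = d1 ->
  Dseq (S (S n)) = (3 * (2 * INR n + 3) * d1 - (INR n + 1) * d0) / (INR n + 2).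
Proof.
  intros h0 h1. pose proof (Drec n) as e. pose proof (pos_INR n).
  apply (Rmult_eq_reg_l (INR n + 2)); [|lra]. rewrite <- h0, <- h1. field_simplify; lra.
Qed.
Lemma Rnext n r0 d0 d1 : Rseq n = r0 -> Dseq n = d0 -> Dseq (S n) = d1 ->
  Rseq (S n) = ((2 * INR n + 3) * r0 + d0 + d1) / (2 * INR n + 1).
Proof.
  intros h0 h1 h2. pose proof (Rrel n) as e. pose proof (pos_INR n).
  apply (Rmult_eq_reg_l (2 * INR n + 1)); [|lra]. rewrite <- h0, <- h1, <- h2. field_simplify; lra.
Qed.

Ltac num := simpl INR; field.

Lemma D2v : Dseq 2 = 13.
Proof. rewrite (Dnext 0 1 3 D0v D1v). simpl INR. field. Qed.
Lemma D3v : Dseq 3 = 63.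
Proof. rewrite (Dnext 1 3 13 D1v D2v). simpl INR. field. Qed.
Lemma D4v : Dseq 4 = 321.
Proof. rewrite (Dnext 2 13 63 D2v D3v). replace (INR 2) with 2 by (simpl; ring). field. Qed.
Lemma D5v : Dseq 5 = 1683.
Proof. rewrite (Dnext 3 63 321 D3v D4v). replace (INR 3) with 3 by (simpl; ring). field. Qed.
Lemma D6v : Dseq 6 = 8989.
Proof. rewrite (Dnext 4 321 1683 D4v D5v). replace (INR 4) with 4 by (simpl; ring). field. Qed.
Lemma R1v : Rseq 1 = 1.
Proof. rewrite (Rnext 0 (-1) 1 3 R0v D0v D1v). simpl INR. field. Qed.
Lemma R2v : Rseq 2 = 7.
Proof. rewrite (Rnext 1 1 3 13 R1v D1v D2v). simpl INR. field. Qed.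
Lemma R3v : Rseq 3 = 25.
Proof. rewrite (Rnext 2 7 13 63 R2v D2v D3v). replace (INR 2) with 2 by (simpl; ring). field. Qed.
Lemma R4v : Rseq 4 = 87.
Proof. rewrite (Rnext 3 25 63 321 R3v D3v D4v). replace (INR 3) with 3 by (simpl; ring). field. Qed.
Lemma R5v : Rseq 5 = 329.
Proof. rewrite (Rnext 4 87 321 1683 R4v D4v D5v). replace (INR 4) with 4 by (simpl; ring). field. Qed.
Lemma R6v : Rseq 6 = 1359.
Proof. rewrite (Rnext 5 329 1683 8989 R5v D5v D6v). replace (INR 5) with 5 by (simpl; ring). field. Qed.

Definition r (n : nat) : R := Rseq (S n) / Rseq n.

Lemma r_rec m : 0 < Rseq m -> 0 < Rseq (S m) -> 0 < Rseq (S (S m)) ->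
  r (S (S m)) = Phi (INR m) (r (S m)) (r m).
Proof.
  intros h0 h1 h2. pose proof (R3rec m) as e. pose proof (pos_INR m).
  unfold r, Phi.
  assert (E : Rseq (S (S (S m))) = ((7 * INR m + 13) * Rseq (S (S m)) - (7 * INR m + 15) * Rseq (S m) + (INR m + 1) * Rseq m) / (INR m + 3)).
  { apply (Rmult_eq_reg_l (INR m + 3)); [|lra]. rewrite <- e. field. lra. }
  rewrite E. field. repeat split; lra.
Qed.

Definition Inv (p : nat) : Prop :=
  (forall k, (1 <= k <= p + 3)%nat -> 0 < Rseq k) /\
  17/5 <= r p /\
  0 < r (S p) - r p /\ r (S p) - r p <= 100 / ((INR p + 1) * (INR p + 2)) /\
  0 < r (S (S p)) - r (S p) /\ r (S (S p)) - r (S p) <= 100 / ((INR p + 2) * (INR p + 3)) /\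
  r (S (S p)) + 100 / (INR p + 3) <= 21.

Lemma Inv3 : Inv 3.
Proof.
  unfold Inv, r. rewrite R3v, R4v, R5v, R6v.
  replace (INR 3) with 3 by (simpl; ring).
  split.
  - intros k Hk. destruct k as [|[|[|[|[|[|[|k]]]]]]]; try lia.
    + rewrite R1v; lra. + rewrite R2v; lra. + rewrite R3v; lra.
    + rewrite R4v; lra. + rewrite R5v; lra. + rewrite R6v; lra.
  - repeat split; unfold Rdiv; lra.
Qed.

Lemma Inv_step p : (3 <= p)%nat -> Inv p -> Inv (S p).
Proof.
  intros Hp [Hpos [Hc [H1 [H2 [H3 [H4 H5]]]]]].
  assert (Hx : 3 <= INR p) by (replace 3 with (INR 3) by (simpl; ring); apply le_INR; auto).
  assert (e1 : r (S (S p)) = Phi (INR p) (r (S p)) (r p)).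
  { apply r_rec; apply Hpos; lia. }
  assert (e2 : r (S (S (S p))) = Phi (INR (S p)) (r (S (S p))) (r (S p))).
  { apply r_rec; apply Hpos; lia. }
  pose proof (step (INR p + 1) (r (S (S p))) (r (S p)) (r p)) as St.
  replace (INR p + 1 - 1) with (INR p) in St by ring.
  replace (INR p + 1 + 1) with (INR p + 2) in St by ring.
  replace (INR p + 1 + 2) with (INR p + 3) in St by ring.
  replace (INR p + 1 + 3) with (INR p + 4) in St by ring.
  rewrite S_INR in e2. rewrite <- e2 in St.
  destruct St as [S1 S2]; try lra; auto.
  unfold Inv. rewrite !S_INR.
  replace (INR p + 1 + 1) with (INR p + 2) by ring.
  replace (INR p + 1 + 2) with (INR p + 3) by ring.
  replace (INR p + 1 + 3) with (INR p + 4) by ring.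
  split; [|split; [lra|split; [lra|split; [lra|split; [lra|split; [lra|]]]]]].
  - intros k Hk. destruct (Nat.eq_dec k (S p + 3)) as [->|Hne]; [|apply Hpos; lia].
    replace (S p + 3)%nat with (S (p + 3)) by lia.
    assert (Hr : 0 < r (p + 3)).
    { replace (p + 3)%nat with (S (S (S p))) by lia. lra. }
    assert (Hq : 0 < Rseq (p + 3)) by (apply Hpos; lia).
    replace (Rseq (S (p + 3))) with (r (p + 3) * Rseq (p + 3)) by (unfold r; field; lra). nra.
  - assert (100 / ((INR p + 3) * (INR p + 4)) + 100 / (INR p + 4) = 100 / (INR p + 3)) by (field; lra).
    lra.
Qed.

Lemma InvAll p : (3 <= p)%nat -> Inv p.
Proof.
  intros H. induction H. apply Inv3. apply Inv_step; auto.
Qed.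

Lemma Rpos k : (1 <= k)%nat -> 0 < Rseq k.
Proof.
  intros H. destruct (InvAll (max 3 k) ltac:(lia)) as [Hp _]. apply Hp. lia.
Qed.

Lemma r_incr p : (3 <= p)%nat -> r p < r (S p).
Proof. intros H. destruct (InvAll p H) as [_ [_ [h _]]]. lra. Qed.

Lemma r_lb p : (3 <= p)%nat -> 87/25 <= r p.
Proof.
  intros H. induction H.
  - unfold r. rewrite R4v, R3v. lra.
  - pose proof (r_incr m H). lra.
Qed.

Lemma r_ub p : r (p + 3) <= 21.
Proof.
  destruct p as [|[|p]].
  - pose proof (r_incr 3 ltac:(lia)). pose proof (r_incr 4 ltac:(lia)).
    destruct (InvAll 3 ltac:(lia)) as [_ [_ [_ [_ [_ [_ h]]]]]].
    assert (0 < 100 / (INR 3 + 3)) by (simpl; unfold Rdiv; apply Rmult_lt_0_compat; lra).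
    simpl Nat.add. lra.
  - pose proof (r_incr 4 ltac:(lia)).
    destruct (InvAll 3 ltac:(lia)) as [_ [_ [_ [_ [_ [_ h]]]]]].
    assert (0 < 100 / (INR 3 + 3)) by (simpl; unfold Rdiv; apply Rmult_lt_0_compat; lra).
    simpl Nat.add. lra.
  - destruct (InvAll (p + 3) ltac:(lia)) as [_ [_ [_ [_ [_ [_ h]]]]]].
    assert (0 < 100 / (INR (p + 3) + 3)).
    { pose proof (pos_INR (p+3)). unfold Rdiv; apply Rmult_lt_0_compat; [lra|]. apply Rinv_0_lt_compat; lra. }
    replace (S (S p) + 3)%nat with (S (S (p + 3))) by lia. lra.
Qed.

Lemma Rmul k : (1 <= k)%nat -> Rseq (S k) = Rseq k * r k.
Proof. intros H. pose proof (Rpos k H). unfold r. field. lra. Qed.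

Lemma Rbound n : (3 <= n)%nat -> Rseq n <= 25 * r n ^ (n - 3).
Proof.
  intros H. induction H.
  - rewrite R3v. simpl. lra.
  - rewrite Rmul by lia. pose proof (r_incr m H). pose proof (r_lb m H).
    replace (S m - 3)%nat with (S (m - 3)) by lia. simpl.
    assert (r m ^ (m - 3) <= r (S m) ^ (m - 3)).
    { apply pow_incr. lra. }
    assert (0 < r m ^ (m - 3)) by (apply pow_lt; lra).
    pose proof (Rpos m ltac:(lia)). nra.
Qed.

Lemma R_lt_pow n : (1 <= n)%nat -> Rseq n < r n ^ n.
Proof.
  intros H. destruct n as [|[|[|n]]]; try lia.
  - unfold r. rewrite R1v, R2v. simpl. lra.
  - unfold r. rewrite R2v, R3v. simpl. lra.
  - pose proof (Rbound (S (S (S n))) ltac:(lia)) as hb.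
    pose proof (r_lb (S (S (S n))) ltac:(lia)) as hl.
    replace (S (S (S n)) - 3)%nat with n in hb by lia.
    replace (r (S (S (S n))) ^ S (S (S n))) with (r (S (S (S n))) ^ 3 * r (S (S (S n))) ^ n) by (simpl; ring).
    assert (25 < r (S (S (S n))) ^ 3).
    { simpl. set (y := r (S (S (S n)))) in *. nra. }
    assert (0 < r (S (S (S n))) ^ n) by (apply pow_lt; lra). nra.
Qed.

Lemma part1 n : (1 <= n)%nat -> rootRseq n < rootRseq (S n).
Proof.
  intros H. unfold rootRseq, Rpower. apply exp_increasing.
  pose proof (Rpos n H) as hp. pose proof (R_lt_pow n H) as hlt.
  assert (hr : 0 < r n) by (pose proof (r_lb n); destruct n as [|[|[|n]]]; try lia;
     [unfold r; rewrite R1v, R2v; lra | unfold r; rewrite R2v, R3v; lra | apply Rlt_le_trans with (87/25); [lra| apply r_lb; lia]]).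
  rewrite Rmul by auto. rewrite ln_mult by auto.
  apply ln_increasing in hlt; auto. rewrite ln_pow in hlt by auto.
  rewrite S_INR.
  assert (hn : 1 <= INR n) by (replace 1 with (INR 1) by reflexivity; apply le_INR; auto).
  set (L := ln (Rseq n)) in *. set (l := ln (r n)) in *. set (x := INR n) in *.
  apply Rmult_lt_reg_l with (x * (x + 1)). nra.
  replace (x * (x + 1) * (/ x * L)) with ((x + 1) * L) by (field; lra).
  replace (x * (x + 1) * (/ (x + 1) * (L + l))) with (x * (L + l)) by (field; lra).
  nra.
Qed.

Lemma r_lim : exists L : R, is_lim_seq r L /\ 87/25 <= L.
Proof.
  set (u := fun p => r (p + 3)).
  assert (Hi : forall p, u p <= u (S p)).
  { intros p. unfold u. replace (S p + 3)%nat with (S (p + 3)) by lia.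
    apply Rlt_le, r_incr. lia. }
  assert (Hb : forall p, u p <= 21) by (intros p; apply r_ub).
  pose proof (Lim_seq_correct' u (ex_finite_lim_seq_incr u 21 Hi Hb)) as Hl.
  exists (real (Lim_seq u)). split.
  - apply (is_lim_seq_incr_n r 3). exact Hl.
  - pose proof (is_lim_seq_incr_compare u _ Hl Hi 0) as h. change (u 0%nat) with (r 3) in h.
    assert (r 3 = 87/25) by (unfold r; rewrite R4v, R3v; reflexivity). cbn [real]. lra.
Qed.

Lemma lim_inv_shift : is_lim_seq (fun m => / (INR m + 3)) 0.
Proof.
  assert (H : is_lim_seq (fun m => INR (m + 3)) p_infty).
  { apply (is_lim_seq_incr_n INR 3). apply is_lim_seq_INR. }
  assert (H2 : is_lim_seq (fun m => INR m + 3) p_infty).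
  { apply is_lim_seq_ext with (fun m => INR (m + 3)); [|exact H].
    intros m. rewrite plus_INR. simpl. ring. }
  apply is_lim_seq_inv in H2; [|discriminate]. simpl in H2. exact H2.
Qed.

Lemma fixpt L : 87/25 <= L -> is_lim_seq r L -> L = 3 + 2 * sqrt 2.
Proof.
  intros HL Hr.
  assert (Ha : is_lim_seq (fun m => r (S m)) L) by (apply (is_lim_seq_incr_1 r); exact Hr).
  assert (Hv : is_lim_seq (fun m => r (S (S m))) L) by (apply (is_lim_seq_incr_1 (fun m => r (S m))); exact Ha).
  assert (Lnz : L <> 0) by lra.
  assert (Ia : is_lim_seq (fun m => / r (S m)) (/ L)).
  { pose proof (is_lim_seq_inv _ _ Ha) as h. simpl in h. apply h. intro e. injection e. lra. }
  assert (Ib : is_lim_seq (fun m => / r m) (/ L)).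
  { pose proof (is_lim_seq_inv _ _ Hr) as h. simpl in h. apply h. intro e. injection e. lra. }
  set (w := fun m => 7 - 7 * / r (S m) + / r (S m) * / r m
       + (-8 + 6 * / r (S m) - 2 * (/ r (S m) * / r m)) * / (INR m + 3)).
  assert (Hw : is_lim_seq w (7 - 7 * / L + / L * / L + (-8 + 6 * / L - 2 * (/ L * / L)) * 0)).
  { unfold w. apply is_lim_seq_plus'; [apply is_lim_seq_plus'; [apply is_lim_seq_minus'|]|].
    - apply is_lim_seq_const.
    - apply (is_lim_seq_mult' (fun _ => 7) _ 7 (/ L)); [apply is_lim_seq_const|exact Ia].
    - apply is_lim_seq_mult'; assumption.
    - apply is_lim_seq_mult'; [|apply lim_inv_shift].
      apply is_lim_seq_minus'; [apply is_lim_seq_plus'|].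
      + apply is_lim_seq_const.
      + apply (is_lim_seq_mult' (fun _ => 6) _ 6 (/ L)); [apply is_lim_seq_const|exact Ia].
      + apply (is_lim_seq_mult' (fun _ => 2) _ 2 (/ L * / L)); [apply is_lim_seq_const|].
        apply is_lim_seq_mult'; assumption. }
  assert (Hvw : is_lim_seq w L).
  { apply is_lim_seq_ext_loc with (fun m => r (S (S m))); [|exact Hv].
    exists 1%nat. intros m Hm.
    rewrite r_rec by (apply Rpos; lia).
    assert (h1 : 0 < r (S m)).
    { unfold r. pose proof (Rpos (S m) ltac:(lia)). pose proof (Rpos (S (S m)) ltac:(lia)).
      apply Rdiv_lt_0_compat; lra. }
    assert (h2 : 0 < r m).
    { unfold r. pose proof (Rpos m ltac:(lia)). pose proof (Rpos (S m) ltac:(lia)).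
      apply Rdiv_lt_0_compat; lra. }
    pose proof (pos_INR m).
    unfold w, Phi. field. repeat split; lra. }
  apply is_lim_seq_unique in Hw. apply is_lim_seq_unique in Hvw.
  rewrite Hvw in Hw. injection Hw. intro E.
  assert (E2 : L * L * L - 7 * L * L + 7 * L - 1 = 0).
  { apply (Rmult_eq_reg_r (/ L * / L)). 2:{ apply Rmult_integral_contrapositive; split; apply Rinv_neq_0_compat; auto. }
    rewrite Rmult_0_l. rewrite E at 1. field. auto. }
  pose proof (sqrt_sqrt 2 ltac:(lra)) as s2.
  pose proof (sqrt_pos 2) as s0.
  assert (E3 : (L - 1) * ((L - 3 - 2 * sqrt 2) * (L - 3 + 2 * sqrt 2)) = 0) by nra.
  apply Rmult_integral in E3. destruct E3 as [E3|E3]; [lra|].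
  apply Rmult_integral in E3. destruct E3 as [E3|E3]; lra.
Qed.

Definition An (k : nat) : R := match k with O => 0 | S _ => ln (r k) end.

Lemma sumAn n : sum_f_R0 An n = ln (Rseq (S n)).
Proof.
  induction n.
  - simpl. rewrite R1v, ln_1. reflexivity.
  - rewrite tech5, IHn. rewrite (Rmul (S n)) by lia. unfold An.
    assert (h1 : 0 < Rseq (S n)) by (apply Rpos; lia).
    assert (h2 : 0 < r (S n)).
    { unfold r. pose proof (Rpos (S (S n)) ltac:(lia)). apply Rdiv_lt_0_compat; lra. }
    rewrite ln_mult; auto.
Qed.

Lemma part2 : is_lim_seq rootRseq (3 + 2 * sqrt 2).
Proof.
  destruct r_lim as [L [Hr HL]].
  pose proof (fixpt L HL Hr) as EL.
  assert (Lp : 0 < L) by lra.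
  assert (Hln : is_lim_seq (fun k => ln (r k)) (ln L)).
  { apply is_lim_seq_continuous; auto.
    apply derivable_continuous_pt. exists (/ L). apply derivable_pt_lim_ln. auto. }
  assert (HA : is_lim_seq An (ln L)).
  { apply is_lim_seq_ext_loc with (fun k => ln (r k)); auto.
    exists 1%nat. intros k Hk. destruct k; [lia|]. reflexivity. }
  apply is_lim_seq_Reals, Cesaro_1, is_lim_seq_Reals in HA.
  apply (is_lim_seq_continuous exp) in HA.
  2:{ apply derivable_continuous_pt, derivable_pt_exp. }
  rewrite exp_ln in HA by auto. rewrite <- EL.
  apply is_lim_seq_ext_loc with (fun n => exp (sum_f_R0 An (Init.Nat.pred n) / INR n)); auto.
  exists 1%nat. intros n Hn. destruct n; [lia|]. simpl Init.Nat.pred.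
  rewrite sumAn. unfold rootRseq, Rpower. f_equal. unfold Rdiv. ring.
Qed.

Theorem corollary4p3 :
  (forall n : nat, (1 <= n)%nat -> rootRseq n < rootRseq (S n)) /\
  is_lim_seq rootRseq (3 + 2 * sqrt 2).
Proof.
  split. exact part1. exact part2.
Qed.
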